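(* Fix $m\ge2$, an integer panel size $k\ge1$, and a budget $0<B<m$. For every panel decision function $\widetilde x:\mathcal L^k\to\mathcal X_B$ there exists a participatory budgeting instance $\langle m,B,(\mathrm{Cost}_1,\dots,\mathrm{Cost}_n)\rangle$ such that for every $\rho>1$, $$\mathbb E_{S\sim\mathcal U_{k,n}}\big[\textsc{Social-Cost}(\widetilde x(S))\big]>\rho\cdot\textsc{Social-Opt}.$$
   Context: A participatory budgeting instance $\langle m,B,(\mathrm{Cost}_1,\dots,\mathrm{Cost}_n)\rangle$: $m$ projects, budget $B>0$, and for each agent $i\in[n]$ a cost function $\mathrm{Cost}_i:[0,1]^m\to[0,1]$ that is monotone (non-increasing when the allocation increases coordinatewise) and $1$-Lipschitz w.r.t. $\|\cdot\|_1$. $\mathcal L$ is the set of $1$-Lipschitz functions $[0,1]^m\to[0,1]$; $\mathcal X_B=\{x\in[0,1]^m:\sum_jx_j\le B\}$. For a panel $S$ of size $k$ (with $n\ge k$), $\widetilde x(S)$ denotes $\widetilde x$ applied to $(\mathrm{Cost}_i)_{i\in S}$. $\textsc{Social-Cost}(x)=\frac1n\sum_i\mathrm{Cost}_i(x)$, $\textsc{Social-Opt}=\min_{x\in\mathcal X_B}\textsc{Social-Cost}(x)$. $\mathcal U_{k,n}$ is the uniform distribution over size-$k$ subsets of $[n]$. *)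

(* Defs.v *)
From HB Require Import structures.
From mathcomp Require Import all_boot all_order all_algebra.
From mathcomp Require Import classical_sets reals.
Import Order.TTheory GRing.Theory Num.Theory.
Local Open Scope ring_scope.

Definition Cube (R : realType) (m : nat) :=
  {x : 'I_m -> R | forall j, 0 <= x j <= 1}.

Definition XB (R : realType) (m : nat) (B : R) :=
  {x : Cube R m | \sum_(j < m) proj1_sig x j <= B}.

Definition pt {R : realType} {m : nat} (x : Cube R m) : 'I_m -> R := proj1_sig x.
Definition xb_pt {R : realType} {m : nat} {B : R} (y : XB R m B) : Cube R m :=
  proj1_sig y.

Definition in_L {R : realType} {m : nat} (f : Cube R m -> R) : Prop :=
  (forall x, 0 <= f x <= 1) /\
  (forall x y, `|f x - f y| <= \sum_(j < m) `|pt x j - pt y j|).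

Definition monotone_cost {R : realType} {m : nat} (f : Cube R m -> R) : Prop :=
  forall x y, (forall j, pt x j <= pt y j) -> f y <= f x.

Definition is_cost {R : realType} {m : nat} (f : Cube R m -> R) : Prop :=
  in_L f /\ monotone_cost f.

Definition social_cost {R : realType} {m n : nat} (Cost : 'I_n -> Cube R m -> R)
  (x : Cube R m) : R := (\sum_(i < n) Cost i x) / n%:R.

Definition social_opt {R : realType} {m n : nat} (B : R)
  (Cost : 'I_n -> Cube R m -> R) : R :=
  inf (range (fun y : XB R m B => social_cost Cost (xb_pt y))).

(* The panel S (a set of agents), listed in increasing order of index. *)
Definition panel {R : realType} {m n : nat} (k : nat) (Cost : 'I_n -> Cube R m -> R)
  (S : {set 'I_n}) : 'I_k -> Cube R m -> R :=
  fun i => nth (fun _ => 0) [seq Cost j | j <- enum S] i.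

Definition expected_panel_cost {R : realType} {m n k : nat} {B : R}
  (xt : ('I_k -> Cube R m -> R) -> XB R m B) (Cost : 'I_n -> Cube R m -> R) : R :=
  (\sum_(S : {set 'I_n} | #|S| == k) social_cost Cost (xb_pt (xt (panel k Cost S))))
  / #|[set S : {set 'I_n} | #|S| == k]|%:R.

(* Main.v *)
Require Import Defs.
From HB Require Import structures.
From mathcomp Require Import all_boot all_order all_algebra.
From mathcomp Require Import classical_sets reals.
From mathcomp Require Import boolp.
From mathcomp Require Import lra.
Import Order.TTheory GRing.Theory Num.Theory.
Local Open Scope ring_scope.

Lemma sum_ge_one (R : realType) (m : nat) (F : 'I_m -> R) (j : 'I_m) :
  (forall i, 0 <= F i) -> F j <= \sum_(i < m) F i.
Proof.
move=> H; rewrite (bigD1 j) //=; apply: ler_wpDr => //.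
by apply: sumr_ge0 => i _.
Qed.

Lemma D_cost (R : realType) (m : nat) (t : R) (j : 'I_m) :
  0 <= t <= 1 -> is_cost (fun x : Cube R m => Num.max 0 (t - pt x j)).
Proof.
move=> /andP[t0 t1]; split; [split|].
- move=> x; have /andP[h0 h1] := proj2_sig x j.
  rewrite le_max lexx /= ge_max ler01 /=; rewrite /pt; lra.
- move=> x y.
  have Hs := @sum_ge_one R m (fun i => `|pt x i - pt y i|) j (fun i => normr_ge0 _).
  apply: le_trans Hs => /=.
  set a := pt x j; set b := pt y j.
  have h1 := ler_norm (a - b); have h2 := ler_norm (b - a).
  rewrite distrC in h2.
  rewrite ler_norml /=.
  rewrite !maxEle; case: ifP => ha; case: ifP => hb; apply/andP; split; lra.
- move=> x y H; have := H j; rewrite !maxEle; case: ifP => ha; case: ifP => hb; lra.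
Qed.

Lemma Z_cost (R : realType) (m : nat) : is_cost (fun x : Cube R m => 0 : R).
Proof.
split; [split|].
- by move=> x; rewrite lexx ler01.
- by move=> x y; rewrite subrr normr0; apply: sumr_ge0 => i _.
- by move=> x y _.
Qed.

Theorem theorem3p4 (R : realType) (m k : nat) (B : R)
  (hm : (2 <= m)%N) (hk : (1 <= k)%N) (hB0 : 0 < B) (hBm : B < m%:R)
  (xt : ('I_k -> Cube R m -> R) -> XB R m B) :
  exists (n : nat) (Cost : 'I_n -> Cube R m -> R),
    (k <= n)%N /\ (forall i, is_cost (Cost i)) /\
    forall rho : R, 1 < rho ->
      expected_panel_cost xt Cost > rho * social_opt B Cost.
Proof.
pose t := Num.min 1 B.
have t0 : 0 < t by rewrite lt_min ltr01 hB0.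
have t1 : t <= 1 by rewrite ge_min lexx.
have tB : t <= B by rewrite ge_min lexx orbT.
pose y0 := xt (fun _ _ => 0).
pose x0 := xb_pt y0.
have [j hj] : exists j, pt x0 j < t.
  case: (boolP [exists j, pt x0 j < t]) => [/existsP//|/existsPn H].
  have Hs : \sum_(j < m) t <= B.
    apply: le_trans (proj2_sig y0); apply: ler_sum => i _.
    by have := H i; rewrite -leNgt.
  rewrite sumr_const card_ord -mulr_natl in Hs.
  have m2 : 2 <= m%:R :> R by rewrite (ler_nat R 2 m).
  have [h|h] := leP 1 B.
    by move: Hs; rewrite /t (min_l h) mulr1; lra.
  move: Hs; rewrite /t (min_r (ltW h)) => Hs.
  have : 0 < (m%:R - 1) * B by apply: mulr_gt0 => //; lra.
  lra.
pose D := fun x : Cube R m => Num.max 0 (t - pt x j).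
pose Cost := fun (i : 'I_k.+1) (x : Cube R m) => if i == ord_max then D x else 0.
have Dc : is_cost D by apply: D_cost; rewrite (ltW t0) t1.
have Cc : forall i, is_cost (Cost i).
  by move=> i; rewrite /Cost; case: (i == ord_max); [exact: Dc | exact: Z_cost].
have Cge0 : forall i x, 0 <= Cost i x by move=> i x; have [[H _] _] := Cc i; case/andP: (H x).
exists k.+1, Cost; split => //; split => // rho hrho.
have yfeas : (forall jj, 0 <= (fun jj : 'I_m => if jj == j then t else 0) jj <= 1).
  by move=> jj; case: (jj == j); rewrite ?lexx ?ler01 // (ltW t0) t1.
pose yc : Cube R m := exist _ _ yfeas.
have ysum : \sum_(jj < m) proj1_sig yc jj <= B.
  rewrite /= (bigD1 j) //= eqxx big1 ?addr0 // => i /negbTE ->. by [].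
pose yx : XB R m B := exist _ yc ysum.
have opt0 : social_opt B Cost = 0.
  have mem0 : range (fun y : XB R m B => social_cost Cost (xb_pt y)) 0.
    exists yx => //; rewrite /social_cost big1 ?mul0r // => i _.
    rewrite /Cost; case: (i == ord_max) => //.
    by rewrite /D /= /pt /= eqxx subrr maxxx.
  have lb0 : lbound (range (fun y : XB R m B => social_cost Cost (xb_pt y))) 0.
    move=> _ [y _ <-]; rewrite /social_cost; apply: divr_ge0 => //.
    by apply: sumr_ge0 => i _.
  apply/eqP; rewrite eq_le; apply/andP; split.
  - by apply: (ge_inf _ mem0); exists 0.
  - by apply: lb_le_inf => //; exists 0.
rewrite opt0 mulr0.
pose S0 := [set~ (@ord_max k)].
have cS0 : #|S0| = k by rewrite cardsC1 card_ord.
have panel0 : panel k Cost S0 = (fun _ _ => 0).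
  apply: funext => i; rewrite /panel.
  have [hi|hi] := ltnP i (size [seq Cost j0 | j0 <- enum S0]); last by rewrite nth_default.
  rewrite (nth_map ord0); last by rewrite size_map in hi.
  apply: funext => x; rewrite /Cost.
  have : nth ord0 (enum S0) i \in S0 by rewrite -mem_enum mem_nth // -(size_map Cost).
  by rewrite in_setC1 => /negbTE ->.
rewrite /expected_panel_cost; apply: divr_gt0; last first.
  rewrite ltr0n card_gt0; apply/set0Pn; exists S0; by rewrite inE cS0.
rewrite (bigD1 S0) /=; last by rewrite cS0.
apply: ltr_pwDl; last by apply: sumr_ge0 => S _; rewrite /social_cost; apply: divr_ge0 => //; apply: sumr_ge0.
rewrite panel0 /social_cost; apply: divr_gt0; last by rewrite ltr0n.
rewrite (bigD1 ord_max) //=; apply: ltr_pwDl; last by apply: sumr_ge0.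
rewrite /Cost eqxx /D lt_max; apply/orP; right; rewrite subr_gt0 //.
Qed.
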